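(* Let $q\ge2$, $d\ge1$ be integers, let $f\colon\mathbb{N}_0\to\mathbb{U}$ be $q$-multiplicative and let $c>0$. Then the estimate $$\sup_{p\in\mathbb{R}[x],\ \deg p\le d}\Big|\frac{1}{q^L}\sum_{n=0}^{q^L-1}f(n)e(p(n))\Big|\ll q^{-cL}\qquad(L\ge0)$$ holds if and only if $$\sup_{M\ge0}\ \sup_{p\in\mathbb{R}[x],\ \deg p\le d}\Big|\frac1N\sum_{n=0}^{N-1}f(n+M)e(p(n))\Big|\ll N^{-c}\qquad(N\ge1).$$
   Context: $\mathbb{N}_0=\{0,1,\dots\}$, $\mathbb{U}=\{z\in\mathbb{C}:|z|=1\}$, $e(t)=e^{2\pi i t}$. $f$ is $q$-multiplicative if $f(m+n)=f(m)f(n)$ whenever $t,m,n\ge0$, $m<q^t$, $q^t\mid n$. $X\ll Y$ means $|X|\le CY$ for a constant $C$ independent of $L$, $N$, $M$, $p$. *)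

(* Defs.v *)
From HB Require Import structures.
From mathcomp Require Import all_boot all_order all_algebra.
From mathcomp Require Import all_classical all_reals all_analysis.
From mathcomp Require Import complex.
Set Implicit Arguments. Unset Strict Implicit. Unset Printing Implicit Defensive.
Import Order.TTheory GRing.Theory Num.Theory.
Local Open Scope ring_scope.

Definition cmod {R : realType} (z : R[i]) : R := ComplexField.Normc.normc z.

Definition e {R : realType} (t : R) : R[i] :=
  (cos (2 * pi * t) +i* sin (2 * pi * t))%C.

Definition unimodular {R : realType} (f : nat -> R[i]) : Prop :=
  forall n, cmod (f n) = 1.

Definition q_multiplicative {R : realType} (q : nat) (f : nat -> R[i]) : Prop :=
  forall t m n : nat, (m < q ^ t)%N -> (q ^ t %| n)%N -> f (m + n)%N = f m * f n.

Definition avg_sum {R : realType} (f : nat -> R[i]) (M N : nat) (p : {poly R}) : R[i] :=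
  (N%:R)^-1 * \sum_(n < N) f (n + M)%N * e p.[n%:R].

(* Main.v *)
Require Import Defs.
From HB Require Import structures.
From mathcomp Require Import all_boot all_order all_algebra.
From mathcomp Require Import all_classical all_reals all_analysis.
From mathcomp Require Import complex.
From mathcomp Require Import ring lra.
Import Order.TTheory GRing.Theory Num.Theory.
Local Open Scope ring_scope.
Local Open Scope complex_scope.

Lemma cmodE {R : realType} (z : R[i]) : (cmod z)%:C = `|z|.
Proof. by case: z. Qed.

Lemma cmod_ge0 {R : realType} (z : R[i]) : 0 <= cmod z.
Proof. by case: z => a b; rewrite /cmod /= sqrtr_ge0. Qed.

Lemma cmodD {R : realType} (z w : R[i]) : cmod (z + w) <= cmod z + cmod w.
Proof. by rewrite -lecR rmorphD /= !cmodE ler_normD. Qed.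

Lemma cmodM {R : realType} (z w : R[i]) : cmod (z * w) = cmod z * cmod w.
Proof. by rewrite /cmod ComplexField.Normc.normcM. Qed.

Lemma cmod_sum {R : realType} (I : Type) (r : seq I) (P : pred I) (F : I -> R[i]) :
  cmod (\sum_(i <- r | P i) F i) <= \sum_(i <- r | P i) cmod (F i).
Proof.
elim: r => [|a r IH]; first by rewrite !big_nil /cmod /= expr0n /= addr0 sqrtr0.
rewrite !big_cons; case: (P a) => //.
by apply: le_trans (cmodD _ _) _; rewrite lerD2l.
Qed.

Lemma cmod_real {R : realType} (r : R) : 0 <= r -> cmod (r%:C) = r.
Proof. by move=> r0; rewrite /cmod /= expr0n /= addr0 sqrtr_sqr ger0_norm. Qed.

Lemma cmod_sqr {R : realType} (z : R[i]) : ((cmod z) ^+ 2)%:C = z * conjc z.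
Proof. by rewrite rmorphXn /= cmodE sqr_normc. Qed.

Lemma e_add {R : realType} (a b : R) : e (a + b) = e a * e b.
Proof. rewrite /e mulrDr cosD sinD; simpc. by congr (_ +i* _); rewrite addrC. Qed.

Lemma cmod_e {R : realType} (t : R) : cmod (e t) = 1.
Proof. by rewrite /cmod /e /= cos2Dsin2 sqrtr1. Qed.

Lemma e0 {R : realType} : e (0 : R) = 1.
Proof. by rewrite /e mulr0 cos0 sin0. Qed.

Lemma e1 {R : realType} : e (1 : R) = 1.
Proof. by rewrite /e mulr1 mulr_natl cos2pi sin2pi. Qed.

Lemma e_natmul {R : realType} (j : nat) (t : R) : e (j%:R * t) = e t ^+ j.
Proof.
elim: j => [|j IH]; first by rewrite mul0r e0 expr0.
by rewrite -addn1 natrD mulrDl mul1r e_add IH exprD expr1.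
Qed.

Lemma e_nat {R : realType} (n : nat) : e (n%:R : R) = 1.
Proof. by rewrite -[n%:R]mulr1 e_natmul e1 expr1n. Qed.

Lemma conjcM' {R : realType} (a b : R[i]) : conjc (a * b) = conjc a * conjc b.
Proof. by case: a => a1 a2; case: b => b1 b2; simpc; congr (_ +i* _); ring. Qed.

Lemma e_conj {R : realType} (t : R) : conjc (e t) = e (- t).
Proof. by rewrite /e mulrN cosN sinN. Qed.

Lemma e_neq1 {R : realType} (t : R) : 0 < t < 1 -> e t != 1.
Proof.
move=> /andP[t0 t1]; apply/negP => /eqP H.
have Hc : cos (2 * pi * t) = 1 by move: H; rewrite /e => -[].
have y0 : 0 < pi * t < pi.
  by rewrite mulr_gt0 ?pi_gt0 //= -[X in _ < X]mulr1 ltr_pM2l ?pi_gt0.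
have := sin_gt0_pi y0 => sy.
have : cos (2 * pi * t) = 1 - 2 * sin (pi * t) ^+ 2.
  have -> : 2 * pi * t = pi * t + pi * t by rewrite -mulrA mulr2n mulrDl mul1r.
  rewrite cosD -!expr2 cos2sin2; ring.
rewrite Hc => /eqP; rewrite -subr_eq0 opprB addrCA subrr addr0 mulf_eq0 => /orP[|].
  by rewrite pnatr_eq0.
by rewrite sqrf_eq0 gt_eqF.
Qed.

Lemma e_neq1' {R : realType} (t : R) : -1 < t < 1 -> t != 0 -> e t != 1.
Proof.
move=> /andP[t1 t2] t0; have [tp|tn] := ltP 0 t; first by apply: e_neq1; rewrite tp.
have -> : e t = e (t + 1) by rewrite e_add e1 mulr1.
apply: e_neq1; rewrite -ltrBlDr sub0r t1 /= -ltrBrDr subrr.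
by rewrite lt_neqAle t0 tn.
Qed.

Lemma e_opp_nat {R : realType} (m : nat) : e (- (m%:R : R)) = 1.
Proof. by have := e_add (m%:R : R) (- m%:R); rewrite subrr e0 e_nat mul1r. Qed.

Lemma geomG {R : realType} (N n m : nat) : (n < N)%N -> (m < N)%N ->
  \sum_(j < N) e (j%:R * ((n%:R - m%:R) / N%:R) : R) = (n == m)%:R * N%:R.
Proof.
move=> nN mN.
have N0 : (N%:R : R) != 0 by rewrite pnatr_eq0 -lt0n (leq_ltn_trans _ nN).
case: eqP => [->|nm].
  rewrite subrr mul0r mul1r.
  under eq_bigr do rewrite mulr0 e0.
  by rewrite sumr_const card_ord.
rewrite mul0r.
under eq_bigr do rewrite e_natmul.
set u := e _.
have uN : u ^+ N = 1.
  rewrite /u -e_natmul mulrC -mulrA mulVf // mulr1 e_add e_nat e_opp_nat mulr1 //.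
have u1 : u - 1 != 0.
  rewrite subr_eq0 /u; apply: e_neq1'.
    have Np : (0 < (N%:R : R)) by rewrite lt0r N0 ler0n.
    rewrite ltr_pdivrMr // ltr_pdivlMr // mulN1r mul1r.
    have h1 : (m%:R : R) < N%:R by rewrite ltr_nat.
    have h2 : (n%:R : R) < N%:R by rewrite ltr_nat.
    have h3 : (0 : R) <= n%:R by [].
    have h4 : (0 : R) <= m%:R by [].
    apply/andP; split; lra.
  rewrite mulf_eq0 invr_eq0 (negbTE N0) orbF subr_eq0 eqr_nat.
  by apply/eqP.
have := subrX1 u N; rewrite uN subrr => /esym/eqP.
by rewrite mulf_eq0 (negbTE u1) /= => /eqP.
Qed.

Lemma parseval {R : realType} (N : nat) (x : nat -> R[i]) : (0 < N)%N ->
  (forall n, cmod (x n) = 1) ->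
  exists j : nat, (N%:R : R) <= cmod (\sum_(n < N) x n * e (j%:R / N%:R * n%:R)) ^+ 2.
Proof.
move=> N0 xu.
set A := fun j : nat => \sum_(n < N) x n * e (j%:R / N%:R * n%:R : R).
have key : \sum_(j < N) ((cmod (A j)) ^+ 2)%:C = (N%:R * N%:R : R[i]).
  under eq_bigr do rewrite cmod_sqr /A rmorph_sum mulr_suml.
  under eq_bigr do under eq_bigr do rewrite mulr_sumr.
  have T : forall (j : 'I_N) (n m : 'I_N),
      x n * e (j%:R / N%:R * n%:R) * conjc (x m * e (j%:R / N%:R * m%:R))
      = x n * conjc (x m) * e (j%:R * ((n%:R - m%:R) / N%:R)).
    move=> j n m; rewrite conjcM' e_conj.
    have -> : (j%:R * ((n%:R - m%:R) / N%:R) : R) =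
              j%:R / N%:R * n%:R + - (j%:R / N%:R * m%:R) by ring.
    rewrite e_add; ring.
  under eq_bigr do under eq_bigr do under eq_bigr do rewrite T.
  rewrite exchange_big /=.
  under eq_bigr do rewrite exchange_big /=.
  under eq_bigr => n _ do under eq_bigr => m _ do rewrite -mulr_sumr (@geomG _ N n m (ltn_ord n) (ltn_ord m)).
  under eq_bigr => n _.
    rewrite (bigD1 n) //= eqxx big1 => [|m /negbTE nm]; last first.
      by rewrite eq_sym in nm; rewrite (_ : (n == m :> nat) = false) ?mul0r ?mulr0.
    rewrite addr0 mul1r -cmod_sqr xu expr1n mul1r.
  over.
  by rewrite /= sumr_const card_ord mulr_natr.
case: (boolP [exists j : 'I_N, (N%:R : R) <= cmod (A j) ^+ 2]).
  by move=> /existsP[j Hj]; exists j.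
rewrite negb_exists => /forallP H.
have : \sum_(j < N) (cmod (A j) ^+ 2) < \sum_(j < N) (N%:R : R).
  apply: ltr_sum.
    by apply/hasP; exists (Ordinal N0); rewrite ?mem_index_enum.
  by move=> j _; have := H j; rewrite real_leNgt ?negbK // realE ?ler0n ?sqr_ge0.
rewrite sumr_const card_ord.
have -> : \sum_(j < N) (cmod (A j) ^+ 2) = N%:R *+ N.
  by apply: complexI; rewrite rmorph_sum /= key rmorphMn /= rmorph_nat mulr_natr.
by rewrite ltxx.
Qed.

Definition Zs {R : realType} (f : nat -> R[i]) (M N : nat) (p : {poly R}) : R[i] :=
  \sum_(n < N) f (n + M)%N * e p.[n%:R].

Definition shp {R : realType} (p : {poly R}) (s : R) := p \Po ('X + s%:P).

Lemma shpE {R : realType} (p : {poly R}) s x : (shp p s).[x] = p.[x + s].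
Proof. by rewrite /shp horner_comp hornerD hornerX hornerC. Qed.

Lemma size_shp {R : realType} (p : {poly R}) s : size (shp p s) = size p.
Proof. by rewrite /shp size_comp_poly2 // size_XaddC. Qed.

Lemma Zs_ext {R : realType} f M N (p p' : {poly R}) :
  (forall n : nat, p.[n%:R] = p'.[n%:R]) -> Zs f M N p = Zs f M N p'.
Proof. by move=> H; apply: eq_bigr => n _; rewrite H. Qed.

Lemma Zs_split {R : realType} f M A B (p : {poly R}) :
  Zs f M (A + B) p = Zs f M A p + Zs f (M + A) B (shp p A%:R).
Proof.
rewrite /Zs big_split_ord /=; congr (_ + _).
apply: eq_bigr => i _; rewrite shpE /= -natrD.
by rewrite [(i + A)%N]addnC [(M + A)%N]addnC addnA [(i + A)%N]addnC.
Qed.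

Lemma Zs0 {R : realType} f M (p : {poly R}) : Zs f M 0 p = 0.
Proof. by rewrite /Zs big_ord0. Qed.

Lemma cmod0 {R : realType} : cmod (0 : R[i]) = 0.
Proof. by rewrite /cmod /= expr0n /= addr0 sqrtr0. Qed.

Lemma cmodN {R : realType} (z : R[i]) : cmod (- z) = cmod z.
Proof. by case: z => a b; rewrite /cmod /= !sqrrN. Qed.

Lemma Zs_triv {R : realType} (f : nat -> R[i]) M N p : unimodular f ->
  cmod (Zs f M N p) <= N%:R.
Proof.
move=> fu; rewrite /Zs; apply: (le_trans (cmod_sum _ _ _ _)).
under eq_bigr do rewrite cmodM fu cmod_e mulr1.
by rewrite sumr_const card_ord.
Qed.

Lemma cmod_avg {R : realType} (f : nat -> R[i]) M N p : (0 < N)%N ->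
  cmod (avg_sum f M N p) = (N%:R)^-1 * cmod (Zs f M N p).
Proof.
move=> N0; rewrite /avg_sum cmodM; congr (_ * _).
have -> : ((N%:R : R[i])^-1) = ((N%:R : R)^-1)%:C.
  by rewrite (fmorphV (real_complex R)) /= rmorph_nat.
by rewrite cmod_real // invr_ge0 ler0n.
Qed.

Lemma pow_id {R : realType} (q : nat) (c : R) (k : nat) : (0 < q)%N ->
  (q%:R : R) ^+ k * q%:R `^ (-(c * k%:R)) = (q%:R `^ (1 - c)) ^+ k.
Proof.
move=> q0.
rewrite -(powR_mulrn _ (ler0n _ q)) -(powR_mulrn _ (powR_ge0 _ _)) -powRrM -powRD.
  by congr (_ `^ _); ring.
by apply/implyP => _; rewrite pnatr_eq0 -lt0n.
Qed.

Lemma block {R : realType} (q d : nat) (f : nat -> R[i]) (C c : R) :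
  (0 < q)%N -> unimodular f -> q_multiplicative q f ->
  (forall (L : nat) (p : {poly R}), (size p <= d.+1)%N ->
      cmod (avg_sum f 0 (q ^ L) p) <= C * (q%:R `^ (- (c * L%:R)))) ->
  forall k a (p : {poly R}), (size p <= d.+1)%N ->
  cmod (Zs f (a * q ^ k) (q ^ k) p) <= C * (q%:R `^ (1 - c)) ^+ k.
Proof.
move=> q0 fu fm H k a p sp.
have -> : Zs f (a * q ^ k) (q ^ k) p = f (a * q ^ k)%N * Zs f 0 (q ^ k) p.
  rewrite /Zs mulr_sumr; apply: eq_bigr => n _.
  rewrite addn0 (fm k n (a * q ^ k)%N (ltn_ord n) (dvdn_mull _ (dvdnn _))).
  by rewrite [f n * _]mulrC mulrA.
rewrite cmodM fu mul1r.
have Q0 : (0 < q ^ k)%N by rewrite expn_gt0 q0.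
have := H k p sp; rewrite cmod_avg // natrX => h.
have qk0 : (q%:R : R) ^+ k != 0 by rewrite expf_neq0 // pnatr_eq0 -lt0n.
have -> : cmod (Zs f 0 (q ^ k) p) =
   (q%:R : R) ^+ k * (((q%:R : R) ^+ k)^-1 * cmod (Zs f 0 (q ^ k) p)).
  by rewrite mulrA divff ?mul1r.
rewrite -pow_id // [X in _ <= X]mulrCA.
by apply: ler_wpM2l => //; rewrite exprn_ge0 ?ler0n.
Qed.

Lemma multiblock {R : realType} (q d : nat) (f : nat -> R[i]) (C c : R) :
  (0 < q)%N -> unimodular f -> q_multiplicative q f ->
  (forall (L : nat) (p : {poly R}), (size p <= d.+1)%N ->
      cmod (avg_sum f 0 (q ^ L) p) <= C * (q%:R `^ (- (c * L%:R)))) ->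
  forall b k a (p : {poly R}), (size p <= d.+1)%N ->
  cmod (Zs f (a * q ^ k) (b * q ^ k) p) <= b%:R * (C * (q%:R `^ (1 - c)) ^+ k).
Proof.
move=> q0 fu fm H; elim=> [|b IH] k a p sp.
  by rewrite mul0n Zs0 cmod0 mul0r.
rewrite mulSn Zs_split -mulSnr.
apply: (le_trans (cmodD _ _)).
rewrite mulrS mulrDl mul1r.
apply: lerD; first exact: (@block R q d f C c q0 fu fm H k a p sp).
by apply: IH; rewrite size_shp.
Qed.

Definition xq {R : realType} (q : nat) (c : R) : R := (q%:R : R) `^ (1 - c).
Definition EE {R : realType} (q : nat) (C c : R) : R := q%:R * C / (xq q c - 1) + 1.

Lemma xq_gt1 {R : realType} (q : nat) (c : R) : (1 < q)%N -> c < 1 -> 1 < xq q c.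
Proof.
move=> q1 c1; rewrite /xq.
have h1 : (0 : R) < 1 - c by rewrite subr_gt0.
have n1 : (1 : R) \is Num.nneg by rewrite nnegrE ler01.
have n2 : (q%:R : R) \is Num.nneg by rewrite nnegrE ler0n.
have h2 : (1 : R) < q%:R by rewrite ltr1n.
by have := (@gt0_ltr_powR R (1 - c) h1 1 q%:R n1 n2 h2); rewrite /= powR1.
Qed.

Lemma EE_ge1 {R : realType} (q : nat) (C c : R) : (1 < q)%N -> c < 1 -> 0 <= C -> 1 <= EE q C c.
Proof.
move=> q1 c1 C0; rewrite /EE lerDr divr_ge0 ?mulr_ge0 ?ler0n //.
by rewrite subr_ge0 ltW // xq_gt1.
Qed.

Lemma EE_step {R : realType} (q : nat) (C c : R) : (1 < q)%N -> c < 1 ->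
  q%:R * C + EE q C c <= EE q C c * xq q c.
Proof.
move=> q1 c1; have hx := xq_gt1 q c q1 c1.
have x0 : xq q c - 1 != 0 by rewrite subr_eq0 gt_eqF.
have -> : EE q C c * xq q c = q%:R * C + EE q C c + (xq q c - 1).
  by rewrite /EE; field.
by rewrite lerDl subr_ge0 ltW.
Qed.

Lemma gen_from {R : realType} (q d : nat) (f : nat -> R[i]) (C c : R) :
  (0 < q)%N -> unimodular f -> q_multiplicative q f ->
  (forall (L : nat) (p : {poly R}), (size p <= d.+1)%N ->
      cmod (avg_sum f 0 (q ^ L) p) <= C * (q%:R `^ (- (c * L%:R)))) ->
  forall k (B : R),
  (forall a r (p : {poly R}), (r <= q ^ k)%N -> (size p <= d.+1)%N ->
      cmod (Zs f (a * q ^ k) r p) <= B) ->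
  forall a s (p : {poly R}), (size p <= d.+1)%N ->
  cmod (Zs f (a * q ^ k) s p) <= (s %/ q ^ k)%:R * (C * xq q c ^+ k) + B.
Proof.
move=> q0 fu fm H k B HB a s p sp.
have Q0 : (0 < q ^ k)%N by rewrite expn_gt0 q0.
rewrite {1}(divn_eq s (q ^ k)) Zs_split.
apply: (le_trans (cmodD _ _)); apply: lerD.
  exact: (@multiblock R q d f C c q0 fu fm H).
rewrite -mulnDl; apply: HB; first exact: ltnW (ltn_pmod _ Q0).
by rewrite size_shp.
Qed.

Lemma LA {R : realType} (q d : nat) (f : nat -> R[i]) (C c : R) :
  (1 < q)%N -> unimodular f -> q_multiplicative q f -> 0 <= C -> c < 1 ->
  (forall (L : nat) (p : {poly R}), (size p <= d.+1)%N ->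
      cmod (avg_sum f 0 (q ^ L) p) <= C * (q%:R `^ (- (c * L%:R)))) ->
  forall k a r (p : {poly R}), (r <= q ^ k)%N -> (size p <= d.+1)%N ->
  cmod (Zs f (a * q ^ k) r p) <= EE q C c * xq q c ^+ k.
Proof.
move=> q1 fu fm C0 c1 H.
have q0 : (0 < q)%N by apply: ltnW.
have hx := xq_gt1 q c q1 c1.
elim=> [|k IH] a r p hr sp.
  rewrite expr0 mulr1; apply: (le_trans (Zs_triv _ _ _ _ fu)).
  apply: le_trans (EE_ge1 q C c q1 c1 C0); rewrite expn0 in hr.
  by rewrite -(ler_nat R) in hr.
have Q0 : (0 < q ^ k)%N by rewrite expn_gt0 q0.
rewrite expnSr [(q ^ k * q)%N]mulnC mulnA.
apply: (le_trans (@gen_from R q d f C c q0 fu fm H k _ IH (a * q) r p sp)).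
have hq : (r %/ q ^ k <= q)%N.
  by rewrite expnSr in hr; have := leq_div2r (q ^ k) hr; rewrite mulKn.
have xk0 : 0 <= xq q c ^+ k by rewrite exprn_ge0 // ltW // (lt_trans ltr01).
apply: (le_trans (y := q%:R * (C * xq q c ^+ k) + EE q C c * xq q c ^+ k)).
  by rewrite lerD2r ler_wpM2r ?mulr_ge0 // ler_nat.
rewrite mulrA -mulrDl exprS mulrA [EE q C c * _]mulrC.
by rewrite ler_wpM2r // mulrC (le_trans (EE_step q C c q1 c1)) // mulrC.
Qed.

Lemma upper {R : realType} (q d : nat) (f : nat -> R[i]) (C c : R) :
  (1 < q)%N -> unimodular f -> q_multiplicative q f -> 0 <= C -> c < 1 ->
  (forall (L : nat) (p : {poly R}), (size p <= d.+1)%N ->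
      cmod (avg_sum f 0 (q ^ L) p) <= C * (q%:R `^ (- (c * L%:R)))) ->
  forall (M N : nat) (p : {poly R}), (1 <= N)%N -> (size p <= d.+1)%N ->
      cmod (avg_sum f M N p) <= (q%:R * C + 2 * EE q C c) * (N%:R `^ (- c)).
Proof.
move=> q1 fu fm C0 c1 H M N p N1 sp.
have q0 : (0 < q)%N by apply: ltnW.
have hx := xq_gt1 q c q1 c1.
set k := trunc_log q N.
have hQ1 : (q ^ k <= N)%N by apply: trunc_logP.
have hQ2 : (N < q ^ k * q)%N by rewrite -expnSr; apply: trunc_log_ltn.
have Q0 : (0 < q ^ k)%N by rewrite expn_gt0 q0.
set Q := (q ^ k)%N in hQ1 hQ2 Q0.
set a := (M %/ Q)%N. set r0 := (M %% Q)%N.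
have r0Q : (r0 < Q)%N by apply: ltn_pmod.
set p' := shp p (- r0%:R).
have sp' : (size p' <= d.+1)%N by rewrite size_shp.
have eqZ : Zs f M N p = Zs f (a * Q) (r0 + N) p' - Zs f (a * Q) r0 p'.
  rewrite Zs_split [X in X - _]addrC addrK.
  have -> : (a * Q + r0)%N = M by rewrite /a /r0 -divn_eq.
  by apply: Zs_ext => n; rewrite !shpE addrK.
have xk0 : 0 <= xq q c ^+ k by rewrite exprn_ge0 // ltW // (lt_trans ltr01).
have E0 := EE_ge1 q C c q1 c1 C0.
have bZ : cmod (Zs f M N p) <= (q%:R * C + 2 * EE q C c) * xq q c ^+ k.
  rewrite eqZ; apply: (le_trans (cmodD _ _)); rewrite cmodN.
  have LAk := @LA R q d f C c q1 fu fm C0 c1 H k.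
  have G := @gen_from R q d f C c q0 fu fm H k _ LAk a (r0 + N)%N p' sp'.
  apply: (le_trans (lerD G (LAk a r0 p' (ltnW r0Q) sp'))).
  have hq : ((r0 + N) %/ Q <= q)%N.
    rewrite -ltnS ltn_divLR // mulSn [(q * Q)%N]mulnC.
    apply: (leq_ltn_trans (_ : r0 + N <= Q + N)%N).
      by rewrite leq_add2r ltnW.
    by rewrite ltn_add2l.
  have : ((r0 + N) %/ Q)%:R * (C * xq q c ^+ k) <= q%:R * (C * xq q c ^+ k).
    by rewrite ler_wpM2r ?mulr_ge0 // ler_nat.
  move=> h; rewrite -addrA (le_trans (lerD h (lexx _))) //.
  by rewrite le_eqVlt; apply/orP; left; apply/eqP; ring.
have xN : xq q c ^+ k <= N%:R `^ (1 - c).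
  rewrite /xq -(powR_mulrn _ (powR_ge0 _ _)) powRAC (powR_mulrn _ (ler0n _ _)) -natrX.
  apply: (@ge0_ler_powR R (1 - c)); rewrite ?nnegrE ?ler0n ?ler_nat // subr_ge0; exact: ltW.

have N0 : (0 < N)%N by [].
rewrite cmod_avg //.
have Nn0 : (N%:R : R) != 0 by rewrite pnatr_eq0 -lt0n.
have -> : N%:R `^ (- c) = (N%:R)^-1 * N%:R `^ (1 - c).
  rewrite -(powR_inv1 (ler0n _ _)) -powRD; first by congr (_ `^ _); ring.
  by apply/implyP => _.
rewrite mulrCA; apply: ler_wpM2l; first by rewrite invr_ge0 ler0n.
apply: (le_trans bZ); apply: ler_wpM2l => //.
by rewrite addr_ge0 ?mulr_ge0 ?ler0n // (le_trans ler01).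
Qed.

Lemma C_ge0 {R : realType} (q d : nat) (f : nat -> R[i]) (C c : R) :
  (forall (L : nat) (p : {poly R}), (size p <= d.+1)%N ->
      cmod (avg_sum f 0 (q ^ L) p) <= C * (q%:R `^ (- (c * L%:R)))) -> 0 <= C.
Proof.
move=> H; have := H 0%N 0; rewrite size_poly0 => /(_ isT).
rewrite mulr0 oppr0 powRr0 mulr1; exact: le_trans (cmod_ge0 _).
Qed.


Lemma c_lt1 {R : realType} (q d : nat) (f : nat -> R[i]) (C c : R) :
  (1 < q)%N -> (1 <= d)%N -> unimodular f ->
  (forall (L : nat) (p : {poly R}), (size p <= d.+1)%N ->
      cmod (avg_sum f 0 (q ^ L) p) <= C * (q%:R `^ (- (c * L%:R)))) -> c < 1.
Proof.
move=> q1 d1 fu H; have C0 := C_ge0 _ _ _ _ _ H.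
have q0 : (0 < q)%N by apply: ltnW.
rewrite ltNge; apply/negP => c1.
have xle1 : xq q c <= 1.
  rewrite /xq -[X in _ <= X](powRr0 (q%:R : R)).
  apply: ler_powR; first by rewrite ler1n ltnW.
  by rewrite subr_le0.
have bnd : forall L : nat, ((q ^ L)%N%:R : R) <= C ^+ 2.
  move=> L; set N := (q ^ L)%N.
  have N0 : (0 < N)%N by rewrite expn_gt0 q0.
  have [j Hj] := @parseval R N (fun n => f (n + 0)%N) N0 (fun n => fu _).
  set p := (j%:R / N%:R : R) *: 'X.
  have sp : (size p <= d.+1)%N.
    by apply: leq_trans (size_scale_leq _ _) _; rewrite size_polyX ltnS.
  have eZ : Zs f 0 N p = \sum_(n < N) f (n + 0)%N * e (j%:R / N%:R * n%:R).
    by apply: eq_bigr => n _; rewrite hornerZ hornerX.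
  have hZ : cmod (Zs f 0 N p) <= C.
    have := H L p sp; rewrite cmod_avg // => h.
    have qk0 : (N%:R : R) != 0 by rewrite pnatr_eq0 -lt0n.
    have -> : cmod (Zs f 0 N p) = N%:R * ((N%:R)^-1 * cmod (Zs f 0 N p)).
      by rewrite mulrA divff ?mul1r.
    apply: (le_trans (ler_wpM2l (ler0n _ _) h)).
    rewrite mulrCA /N natrX pow_id // -[X in _ <= X]mulr1 ler_wpM2l //.
    by apply: exprn_ile1 => //; rewrite powR_ge0.
  apply: (le_trans Hj); rewrite -eZ expr2.
  by apply: ler_pM => //; apply: cmod_ge0.
have := bnd (Num.Def.archi_bound (C ^+ 2)).
have := archi_boundP (sqr_ge0 C).
set n := Num.Def.archi_bound _ => h1 h2.
have h3 : (n%:R : R) < (q ^ n)%N%:R by rewrite ltr_nat ltn_expl.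
by have := lt_le_trans (lt_trans h1 h3) h2; rewrite ltxx.
Qed.

Theorem lemmaA1 (R : realType) (q d : nat) (f : nat -> R[i]) (c : R) :
  (2 <= q)%N -> (1 <= d)%N -> unimodular f -> q_multiplicative q f -> 0 < c ->
  (exists C : R, forall (L : nat) (p : {poly R}), (size p <= d.+1)%N ->
      cmod (avg_sum f 0 (q ^ L) p) <= C * (q%:R `^ (- (c * L%:R)))) <->
  (exists C : R, forall (M N : nat) (p : {poly R}), (1 <= N)%N -> (size p <= d.+1)%N ->
      cmod (avg_sum f M N p) <= C * (N%:R `^ (- c))).
Proof.
move=> q2 d1 fu fm c0; split.
  move=> [C H].
  have c1 := c_lt1 _ _ _ _ _ q2 d1 fu H.
  exists (q%:R * C + 2 * EE q C c).
  exact: (upper _ _ _ _ _ q2 fu fm (C_ge0 _ _ _ _ _ H) c1 H).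
move=> [C H]; exists C => L p sp.
have q0 : (0 < q)%N by apply: ltnW.
have QL : (0 < q ^ L)%N by rewrite expn_gt0 q0.
have := H 0%N (q ^ L)%N p QL sp.
suff -> : ((q ^ L)%N%:R : R) `^ (- c) = q%:R `^ (- (c * L%:R)) by [].
rewrite natrX -(powR_mulrn _ (ler0n _ _)) -powRrM; congr (_ `^ _); ring.
Qed.
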